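(* Let $\Gamma$ be a finitely generated group which has a sequence of finite normal subgroups $A_i$ with $|A_i|\to\infty$. Then $\mathrm{RG}(\Gamma,(\Gamma_j))=0$ for any chain $(\Gamma_j)$ in $\Gamma$ with $\bigcap_j\Gamma_j=\{1\}$.
   Context: A chain in $\Gamma$ is a decreasing infinite sequence $\Gamma=\Gamma_0>\Gamma_1>\cdots$ of finite index subgroups (not necessarily normal). With $d(H)$ the minimal number of generators of $H$, $r(\Gamma,H)=(d(H)-1)/|\Gamma:H|$ and $\mathrm{RG}(\Gamma,(\Gamma_j))=\lim_j r(\Gamma,\Gamma_j)$. *)

(* Defs.v *)
From Stdlib Require Import Reals List Arith.
Import ListNotations.
Open Scope R_scope.

Record group := Group {
  gcar :> Type;
  gmul : gcar -> gcar -> gcar;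
  gone : gcar;
  ginv : gcar -> gcar;
  gmulA : forall x y z, gmul x (gmul y z) = gmul (gmul x y) z;
  gmul1 : forall x, gmul gone x = x;
  gmulV : forall x, gmul (ginv x) x = gone
}.

Arguments gmul {g}. Arguments gone {g}. Arguments ginv {g}.

Section Defs.
Variable G : group.

Definition is_subgroup (H : G -> Prop) : Prop :=
  H gone /\ (forall x y, H x -> H y -> H (gmul x y)) /\ (forall x, H x -> H (ginv x)).

Definition is_normal_subgroup (H : G -> Prop) : Prop :=
  is_subgroup H /\ forall g x, H x -> H (gmul (ginv g) (gmul x g)).

Definition in_gen (S : G -> Prop) (x : G) : Prop :=
  forall K, is_subgroup K -> (forall s, S s -> K s) -> K x.

Definition generated_by (H : G -> Prop) (l : list G) : Prop :=
  (forall s, In s l -> H s) /\ (forall x, H x <-> in_gen (fun s => In s l) x).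

Definition finitely_generated : Prop :=
  exists l, generated_by (fun _ => True) l.

Definition has_rank (H : G -> Prop) (n : nat) : Prop :=
  (exists l, length l = n /\ generated_by H l) /\
  (forall l, generated_by H l -> (n <= length l)%nat).

Definition has_index (H : G -> Prop) (n : nat) : Prop :=
  exists t : list G, length t = n /\
    (forall x, exists i, (i < n)%nat /\ H (gmul (ginv (nth i t gone)) x)) /\
    (forall i j, (i < n)%nat -> (j < n)%nat ->
       H (gmul (ginv (nth i t gone)) (nth j t gone)) -> i = j).

Definition finite_index (H : G -> Prop) : Prop :=
  is_subgroup H /\ exists n, has_index H n.

Definition has_card (P : G -> Prop) (n : nat) : Prop :=
  exists l, length l = n /\ NoDup l /\ forall x, P x <-> In x l.

Definition is_chain (Gam : nat -> G -> Prop) : Prop :=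
  (forall x, Gam 0%nat x) /\
  (forall j, finite_index (Gam j)) /\
  (forall j x, Gam (S j) x -> Gam j x) /\
  (forall j, exists x, Gam j x /\ ~ Gam (S j) x).

End Defs.

Arguments is_subgroup {G}. Arguments is_normal_subgroup {G}.
Arguments has_rank {G}. Arguments has_index {G}. Arguments has_card {G}.
Arguments is_chain {G}. Arguments finite_index {G}.

(* Main.v *)
Require Import Defs.
From Stdlib Require Import Reals List Arith Lia Lra Classical.
Import ListNotations.
Open Scope nat_scope.

Local Infix "·" := gmul (at level 40, left associativity).

Lemma mulVr {G : group} (x : G) : x · ginv x = gone.
Proof.
  rewrite <- (gmul1 G (x · ginv x)).
  rewrite <- (gmulV G (ginv x)) at 1.
  rewrite <- gmulA. rewrite (gmulA G (ginv x) x (ginv x)). rewrite gmulV, gmul1.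
  apply gmulV.
Qed.

Lemma mulr1 {G : group} (x : G) : x · gone = x.
Proof. rewrite <- (gmulV G x), gmulA, mulVr, gmul1. reflexivity. Qed.

Lemma inv_uniq {G : group} (x y : G) : x · y = gone -> y = ginv x.
Proof.
  intro H. rewrite <- (gmul1 G y), <- (gmulV G x), <- gmulA, H, mulr1. reflexivity.
Qed.

Lemma inv_inv {G : group} (x : G) : ginv (ginv x) = x.
Proof. symmetry. apply inv_uniq. apply gmulV. Qed.

Lemma inv_mul {G : group} (x y : G) : ginv (x · y) = ginv y · ginv x.
Proof.
  symmetry. apply inv_uniq.
  rewrite gmulA, <- (gmulA G x y), mulVr, mulr1, mulVr. reflexivity.
Qed.

Lemma inv1 {G : group} : ginv (@gone G) = gone.
Proof. symmetry. apply inv_uniq. apply gmul1. Qed.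

Lemma mulKV {G : group} (a x : G) : a · x · ginv x = a.
Proof. rewrite <- gmulA, mulVr, mulr1. reflexivity. Qed.
Lemma mulVK {G : group} (a x : G) : a · ginv x · x = a.
Proof. rewrite <- gmulA, gmulV, mulr1. reflexivity. Qed.

Ltac gnorm := repeat progress (rewrite ?gmulA, ?inv_mul, ?inv_inv, ?inv1, ?mulKV, ?mulVK,
   ?mulVr, ?gmulV, ?gmul1, ?mulr1).

Lemma test {G : group} (a b c : G) : ginv (a · ginv b) · (a · c) = b · c.
Proof. gnorm. reflexivity. Qed.


Lemma sg1 {G : group} (H : G -> Prop) : is_subgroup H -> H gone.
Proof. intros [h _]. exact h. Qed.
Lemma sgM {G : group} (H : G -> Prop) x y : is_subgroup H -> H x -> H y -> H (x · y).
Proof. intros [_ [h _]]. apply h. Qed.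
Lemma sgV {G : group} (H : G -> Prop) x : is_subgroup H -> H x -> H (ginv x).
Proof. intros [_ [_ h]]. apply h. Qed.
Lemma sg_eq {G : group} (H : G -> Prop) x y : H x -> x = y -> H y.
Proof. intros h e; subst; exact h. Qed.

Definition prodset {G : group} (P Q : G -> Prop) (y : G) : Prop :=
  exists g a, P g /\ Q a /\ y = g · a.

Lemma prodset_sub {G : group} (P A : G -> Prop) :
  is_subgroup P -> is_normal_subgroup A -> is_subgroup (prodset P A).
Proof.
  intros HP [HA HN]. split; [|split].
  - exists gone, gone. split; [apply sg1; auto|split; [apply sg1; apply HA|]]. gnorm; reflexivity.
  - intros x y [g [a [Pg [Aa ->]]]] [h [b [Ph [Ab ->]]]].
    exists (g · h), (ginv h · (a · h) · b). repeat split.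
    + apply sgM; auto.
    + apply sgM; auto.
    + gnorm. reflexivity.
  - intros x [g [a [Pg [Aa ->]]]].
    exists (ginv g), (ginv (ginv g) · (ginv a · ginv g)). repeat split.
    + apply sgV; auto.
    + apply HN. apply sgV; auto.
    + gnorm. reflexivity.
Qed.

Lemma inter_sub {G : group} (P Q : G -> Prop) :
  is_subgroup P -> is_subgroup Q -> is_subgroup (fun x => P x /\ Q x).
Proof.
  intros HP HQ. split; [|split].
  - split; apply sg1; auto.
  - intros x y [] []; split; apply sgM; auto.
  - intros x []; split; apply sgV; auto.
Qed.

Lemma choice_list {A B : Type} (R : A -> B -> Prop) (l : list A) :
  (forall x, In x l -> exists y, R x y) -> exists l', Forall2 R l l'.
Proof.
  induction l as [|x l IH]; intros H.
  - exists []. constructor.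
  - destruct (H x (or_introl eq_refl)) as [y Hy].
    destruct IH as [l' Hl']. { intros z Hz. apply H. right. exact Hz. }
    exists (y :: l'). constructor; auto.
Qed.

Lemma Forall2_in_l {A B : Type} (R : A -> B -> Prop) l l' x :
  Forall2 R l l' -> In x l -> exists y, In y l' /\ R x y.
Proof.
  induction 1; simpl; intros Hin; [contradiction|].
  destruct Hin as [<-|Hin].
  - exists y. auto.
  - destruct (IHForall2 Hin) as [z [? ?]]. exists z. auto.
Qed.

Lemma Forall2_in_r {A B : Type} (R : A -> B -> Prop) l l' y :
  Forall2 R l l' -> In y l' -> exists x, In x l /\ R x y.
Proof.
  induction 1; simpl; intros Hin; [contradiction|].
  destruct Hin as [<-|Hin].
  - exists x. auto.
  - destruct (IHForall2 Hin) as [z [? ?]]. exists z. auto.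
Qed.

Lemma NoDup_Forall2 {A B : Type} (R : A -> B -> Prop) l l' :
  Forall2 R l l' -> NoDup l ->
  (forall x x' y, In x l -> In x' l -> R x y -> R x' y -> x = x') -> NoDup l'.
Proof.
  induction 1 as [|x y l l' Hxy HF IH]; intros Hnd Hinj; constructor.
  - intros Hin. destruct (Forall2_in_r _ _ _ _ HF Hin) as [x' [Hx' Rx']].
    assert (x = x') by (apply (Hinj x x' y); simpl; auto).
    subst. inversion Hnd; contradiction.
  - apply IH. inversion Hnd; auto. intros a b c Ha Hb; apply Hinj; simpl; auto.
Qed.

Lemma NoDup_prod {A B : Type} (l : list A) (l' : list B) :
  NoDup l -> NoDup l' -> NoDup (list_prod l l').
Proof.
  induction 1 as [|x l Hx Hl IH]; intros Hl'; simpl; [constructor|].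
  apply NoDup_app.
  - apply NoDup_map_NoDup_ForallPairs; auto.
    intros a b _ _ e. inversion e; auto.
  - auto.
  - intros [a b] Ha Hb. apply in_map_iff in Ha. destruct Ha as [c [e _]]. inversion e; subst.
    apply in_prod_iff in Hb. destruct Hb. contradiction.
Qed.

Lemma greedy {T : Type} (E : T -> T -> Prop) (l : list T) :
  (forall x, E x x) -> (forall x y, E x y -> E y x) ->
  exists l', NoDup l' /\ (forall x, In x l -> exists y, In y l' /\ E y x) /\
    (forall x y, In x l' -> In y l' -> E x y -> x = y).
Proof.
  intros Er Es. induction l as [|z l IH].
  - exists []. repeat split; [constructor| simpl; tauto | simpl; tauto].
  - destruct IH as [l' [Hnd [Hcov Hu]]].
    destruct (classic (exists y, In y l' /\ E y z)) as [Hex|Hnex].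
    + exists l'. repeat split; auto. intros x [e|Hx]; [subst x; exact Hex|auto].
    + exists (z :: l'). repeat split.
      * constructor; auto. intros Hin. apply Hnex. exists z. auto.
      * intros x [e|Hx]. subst x. exists z; simpl; auto.
        destruct (Hcov x Hx) as [y [? ?]]. exists y; simpl; auto.
      * intros x y [e1|Hx] [e2|Hy] Exy; try subst x; try subst y; auto.
        -- exfalso. apply Hnex. exists y; auto.
        -- exfalso. apply Hnex. exists x; auto.
Qed.

Lemma schreier {G : group} (S : list G) (M : G -> Prop) (T : list G) :
  generated_by G (fun _ => True) S -> is_subgroup M ->
  (forall x, exists t, In t T /\ M (ginv t · x)) ->
  (forall t u, In t T -> In u T -> M (ginv t · u) -> t = u) ->
  exists L, generated_by G M L /\ length L <= 1 + length S * length T.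
Proof.
  intros HS HM Hcov Huniq.
  destruct (Hcov gone) as [t0 [Ht0 Mt0]].
  assert (Mt0' : M t0).
  { apply sg_eq with (ginv (ginv t0 · gone)); [apply sgV; auto | gnorm; reflexivity]. }
  destruct (choice_list (fun p y => exists u, In u T /\ M (ginv u · (fst p · snd p)) /\
                           y = ginv u · (fst p · snd p)) (list_prod S T)) as [Y HY].
  { intros p _. destruct (Hcov (fst p · snd p)) as [u [Hu Mu]]. eauto. }
  assert (HYM : forall y, In y (t0 :: Y) -> M y).
  { intros y [e|Hy]; [subst; auto|].
    destruct (Forall2_in_r _ _ _ _ HY Hy) as [p [_ [u [_ [Mu ->]]]]]. exact Mu. }
  exists (t0 :: Y). split.
  2:{ simpl. rewrite <- (Forall2_length HY), length_prod. lia. }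
  split; [exact HYM|]. intros x. split.
  - intros Mx K HK HKL.
    set (Q := fun g => forall t u, In t T -> In u T -> M (ginv u · (g · t)) -> K (ginv u · (g · t))).
    assert (HQ : is_subgroup Q).
    { split; [|split].
      - intros t u Ht Hu HMu. rewrite gmul1 in *.
        assert (u = t) by (apply Huniq; auto). subst. gnorm. apply sg1; auto.
      - intros a b Qa Qb t u Ht Hu HMu.
        destruct (Hcov (b · t)) as [w [Hw Mw]].
        apply sg_eq with ((ginv u · (a · w)) · (ginv w · (b · t))).
        2:{ gnorm. reflexivity. }
        apply (sgM K _ _ HK).
        + apply Qa; auto.
          apply sg_eq with ((ginv u · (a · b · t)) · ginv (ginv w · (b · t))).
          * apply sgM; auto; apply sgV; auto.
          * gnorm. reflexivity.
        + apply Qb; auto.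
      - intros a Qa t u Ht Hu HMu.
        assert (K (ginv t · (a · u))).
        { apply Qa; auto. apply sg_eq with (ginv (ginv u · (ginv a · t))); [apply sgV; auto| gnorm; reflexivity]. }
        apply sg_eq with (ginv (ginv t · (a · u))); [apply sgV; auto| gnorm; reflexivity]. }
    assert (HSQ : forall s, In s S -> Q s).
    { intros s Hs t u Ht Hu HMu.
      destruct (Forall2_in_l _ _ _ (s, t) HY) as [y [Hy [u0 [Hu0 [Mu0 ->]]]]].
      { apply in_prod; auto. }
      simpl in *. assert (u = u0).
      { apply Huniq; auto. apply sg_eq with ((ginv u · (s · t)) · ginv (ginv u0 · (s · t))).
        - apply sgM; auto. apply sgV; auto.
        - gnorm. reflexivity. }
      subst. apply HKL. right. exact Hy. }
    assert (Qx : Q x).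
    { apply (proj1 (proj2 HS x) I). exact HQ. exact HSQ. }
    assert (Kt0 : K t0) by (apply HKL; left; reflexivity).
    assert (K (ginv t0 · (x · t0))).
    { apply Qx; auto. apply sgM; auto. apply sgV; auto. apply sgM; auto. }
    apply sg_eq with (t0 · (ginv t0 · (x · t0)) · ginv t0).
    + apply sgM; auto. apply sgM; auto. apply sgV; auto.
    + gnorm. reflexivity.
  - intros Hg. apply Hg; auto.
Qed.

Lemma count_lemma {G : group} (Gam A : G -> Prop) (la T' : list G) (n : nat) :
  is_subgroup Gam -> is_normal_subgroup A -> NoDup la -> (forall x, A x <-> In x la) ->
  NoDup T' -> (forall x, Gam x -> A x -> x = gone) ->
  (forall t u, In t T' -> In u T' -> prodset Gam A (ginv t · u) -> t = u) ->
  has_index Gam n -> length T' * length la <= n.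
Proof.
  intros HG HA Hla HAla HT' Htriv Huniq [T [Hlen [Hcov Hu]]].
  destruct (choice_list (fun p k => k < n /\ Gam (ginv (nth k T gone) · (fst p · snd p))) (list_prod T' la))
    as [K HK].
  { intros p _. destruct (Hcov (fst p · snd p)) as [k [? ?]]. eauto. }
  assert (HndK : NoDup K).
  { apply (NoDup_Forall2 _ _ _ HK). apply NoDup_prod; auto.
    intros [t a] [t' b] k Hp Hp' [_ H1] [_ H2]. simpl in *.
    apply in_prod_iff in Hp, Hp'. destruct Hp as [Ht Ha]. destruct Hp' as [Ht' Hb].
    apply HAla in Ha, Hb.
    set (c := nth k T gone) in *.
    assert (Hg : Gam (ginv (ginv c · (t · a)) · (ginv c · (t' · b)))).
    { apply sgM; auto. apply sgV; auto. }
    set (g := ginv (ginv c · (t · a)) · (ginv c · (t' · b))) in *.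
    assert (t = t').
    { apply Huniq; auto. exists g, (ginv g · (a · g) · ginv b). split; [exact Hg|split].
      - apply sgM. apply HA. apply HA; auto. apply sgV; auto. apply HA.
      - unfold g. gnorm. reflexivity. }
    subst t'.
    assert (Gam (ginv a · b)) by (apply sg_eq with g; [exact Hg| unfold g; gnorm; reflexivity]).
    assert (A (ginv a · b)) by (apply sgM; [apply HA| apply sgV; [apply HA|auto] | auto]).
    assert (e : ginv a · b = gone) by auto.
    assert (b = a).
    { transitivity (a · (ginv a · b)); [gnorm; reflexivity| rewrite e; gnorm; reflexivity]. }
    subst. reflexivity. }
  assert (Hinc : incl K (seq 0 n)).
  { intros k Hk. destruct (Forall2_in_r _ _ _ _ HK Hk) as [p [_ [Hk' _]]]. apply in_seq. lia. }
  pose proof (NoDup_incl_length HndK Hinc) as Hl.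
  rewrite length_seq, <- (Forall2_length HK), length_prod in Hl. exact Hl.
Qed.

Lemma proj_lemma {G : group} (Gam A : G -> Prop) (LM : list G) :
  is_subgroup Gam -> is_normal_subgroup A -> (forall x, Gam x -> A x -> x = gone) ->
  generated_by G (prodset Gam A) LM ->
  exists LG, generated_by G Gam LG /\ length LG = length LM.
Proof.
  intros HG HA Htriv HLM.
  destruct (choice_list (fun y g => Gam g /\ exists a, A a /\ y = g · a) LM) as [LG HLG].
  { intros y Hy. destruct (proj1 HLM y Hy) as [g [a [? [? ?]]]]. eauto. }
  exists LG. split; [| symmetry; apply (Forall2_length HLG)].
  assert (HGL : forall s, In s LG -> Gam s).
  { intros s Hs. destruct (Forall2_in_r _ _ _ _ HLG Hs) as [y [_ [? _]]]. auto. }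
  split; [exact HGL|]. intros x. split.
  - intros Gx K' HK' HKL.
    assert (HK : is_subgroup (prodset (fun g => Gam g /\ K' g) A)).
    { apply prodset_sub; auto. apply inter_sub; auto. }
    assert (Hx : prodset Gam A x).
    { exists x, gone. split; [auto|split; [apply HA|gnorm; reflexivity]]. }
    apply (proj1 (proj2 HLM x)) in Hx.
    destruct (Hx _ HK) as [g [a [[Gg Kg] [Aa ->]]]].
    + intros y Hy. destruct (Forall2_in_l _ _ _ _ HLG Hy) as [g [Hg [Gg [a [Aa ->]]]]].
      exists g, a. repeat split; auto.
    + assert (Gam a).
      { apply sg_eq with (ginv g · (g · a)); [apply sgM; auto; apply sgV; auto| gnorm; reflexivity]. }
      rewrite (Htriv a); auto. gnorm. exact Kg.
  - intros Hg. apply Hg; auto.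
Qed.

Lemma key {G : group} (S : list G) (Gam A : G -> Prop) (la : list G) (n d : nat) :
  generated_by G (fun _ => True) S -> is_subgroup Gam -> is_normal_subgroup A ->
  NoDup la -> (forall x, A x <-> In x la) ->
  (forall x, Gam x -> A x -> x = gone) ->
  has_index Gam n -> has_rank Gam d ->
  (d - 1) * length la <= length S * n.
Proof.
  intros HS HG HA Hla HAla Htriv Hidx [_ Hrank].
  pose proof (prodset_sub Gam A HG HA) as HM.
  set (M := prodset Gam A) in *.
  assert (GM : forall x, Gam x -> M x).
  { intros x Gx. exists x, gone. split; [auto|split; [apply HA|gnorm; reflexivity]]. }
  pose proof Hidx as [T [Hlen [Hcov _]]].
  destruct (greedy (fun x y => M (ginv x · y)) T) as [T' [HndT' [HcovT' HuT']]].
  { intros x. gnorm. apply sg1; auto. }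
  { intros x y Hxy. apply sg_eq with (ginv (ginv x · y)); [apply sgV; auto| gnorm; reflexivity]. }
  assert (Hcov' : forall x, exists t, In t T' /\ M (ginv t · x)).
  { intros x. destruct (Hcov x) as [k [Hk Gk]].
    destruct (HcovT' (nth k T gone)) as [y [Hy My]]. { apply nth_In. lia. }
    exists y. split; auto.
    apply sg_eq with ((ginv y · nth k T gone) · (ginv (nth k T gone) · x)).
    - apply sgM; auto.
    - gnorm. reflexivity. }
  pose proof (count_lemma Gam A la T' n HG HA Hla HAla HndT' Htriv HuT' Hidx) as Hc.
  destruct (schreier S M T' HS HM Hcov' HuT') as [LM [HLM HlenM]].
  destruct (proj_lemma Gam A LM HG HA Htriv HLM) as [LG [HLG HlenG]].
  pose proof (Hrank LG HLG) as Hd.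
  assert (d - 1 <= length S * length T') by lia.
  apply Nat.le_trans with (length S * length T' * length la).
  - apply Nat.mul_le_mono_r. exact H.
  - rewrite <- Nat.mul_assoc. apply Nat.mul_le_mono_l. exact Hc.
Qed.

Lemma chain_mono {G : group} (Gam : nat -> G -> Prop) :
  (forall j x, Gam (S j) x -> Gam j x) -> forall j j' x, j <= j' -> Gam j' x -> Gam j x.
Proof.
  intros Hm j j' x Hle. induction Hle; auto.
Qed.

Lemma eventually_trivial {G : group} (Gam : nat -> G -> Prop) (la : list G) :
  (forall j x, Gam (S j) x -> Gam j x) -> (forall x, (forall j, Gam j x) -> x = gone) ->
  exists J, forall j, J <= j -> forall x, In x la -> Gam j x -> x = gone.
Proof.
  intros Hm Hint. induction la as [|z la [J0 HJ0]].
  - exists 0. simpl. tauto.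
  - destruct (classic (z = gone)) as [ez|nz].
    + exists J0. intros j Hj x [e|Hx] Gx; [subst; auto| eauto].
    + destruct (classic (forall j, Gam j z)) as [Hall|Hn]; [exfalso; auto|].
      apply not_all_ex_not in Hn. destruct Hn as [j1 Hj1].
      exists (Nat.max J0 j1). intros j Hj x [e|Hx] Gx.
      * subst x. exfalso. apply Hj1. apply (chain_mono Gam Hm j1 j); auto. lia.
      * apply (HJ0 j); auto. lia.
Qed.

Lemma d_pos {G : group} (Gam : nat -> G -> Prop) j d :
  is_chain Gam -> has_rank (Gam j) d -> 1 <= d.
Proof.
  intros [_ [Hfi [_ Hstr]]] [[l [Hl Hgen]] _].
  destruct d; [|lia]. exfalso.
  destruct l; [|simpl in Hl; discriminate].
  destruct (Hstr j) as [x [Gx nGx]].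
  assert (x = gone).
  { apply (proj1 (proj2 Hgen x) Gx (fun y => y = gone)).
    - split; [reflexivity|split].
      + intros a b -> ->. gnorm. reflexivity.
      + intros a ->. apply inv1.
    - simpl. tauto. }
  subst. apply nGx. apply sg1. apply (Hfi (S j)).
Qed.

Lemma idx_pos {G : group} (H : G -> Prop) n : has_index H n -> 1 <= n.
Proof. intros [T [_ [Hcov _]]]. destruct (Hcov gone) as [k [Hk _]]. lia. Qed.

Open Scope R_scope.

Theorem proposition4 (G : group) (A : nat -> G -> Prop) (a : nat -> nat) :
  finitely_generated G ->
  (forall i, is_normal_subgroup (A i)) ->
  (forall i, has_card (A i) (a i)) ->
  (forall N : nat, exists i0 : nat, forall i : nat, (i0 <= i)%nat -> (N <= a i)%nat) ->
  forall (Gam : nat -> G -> Prop),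
    is_chain Gam ->
    (forall x, (forall j, Gam j x) -> x = gone) ->
    forall d idx : nat -> nat,
      (forall j, has_rank (Gam j) (d j)) ->
      (forall j, has_index (Gam j) (idx j)) ->
      Un_cv (fun j => (INR (d j) - 1) / INR (idx j)) 0.
Proof.
  intros [S HS] HAn Hcard Hgrow Gam Hch Hint d idx Hd Hidx.
  pose proof Hch as [H0 [Hfi [Hmono Hstrict]]].
  intros eps Heps.
  destruct (INR_unbounded (INR (length S) / eps)) as [N HN].
  destruct (Hgrow N) as [i0 Hi0].
  destruct (Hcard i0) as [la [Hlen [Hnd HAla]]].
  destruct (eventually_trivial Gam la Hmono Hint) as [J HJ].
  exists J. intros j Hj.
  assert (Hk : ((d j - 1) * length la <= length S * idx j)%nat).
  { apply (key S (Gam j) (A i0) la); auto.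
    - apply (Hfi j).
    - intros x Gx Ax. apply (HJ j); auto. apply HAla; auto. }
  pose proof (d_pos Gam j (d j) Hch (Hd j)) as Hd1.
  pose proof (idx_pos _ _ (Hidx j)) as Hn1.
  pose proof (Hi0 i0 (Nat.le_refl _)) as HaN. rewrite <- Hlen in HaN.
  apply le_INR in Hk, Hd1, Hn1, HaN.
  rewrite !mult_INR in Hk. rewrite minus_INR in Hk by (apply INR_le; exact Hd1).
  simpl in Hd1, Hn1.
  set (x := INR (d j)) in *. set (n := INR (idx j)) in *.
  set (al := INR (length la)) in *. set (k := INR (length S)) in *.
  assert (k0 : 0 <= k) by apply pos_INR.
  assert (HN' : k < INR N * eps).
  { apply (Rmult_lt_compat_r eps) in HN; auto. unfold Rdiv in HN.
    rewrite Rmult_assoc, Rinv_l in HN by lra. lra. }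
  assert (Hlt : x - 1 < eps * n).
  { destruct (Rlt_or_le (x - 1) (eps * n)) as [h|h]; auto. exfalso.
    assert (eps * n * al <= (x - 1) * al) by (apply Rmult_le_compat_r; [apply pos_INR| exact h]).
    assert (eps * n * INR N <= eps * n * al) by (apply Rmult_le_compat_l; [nra| exact HaN]).
    assert (k * n < INR N * eps * n) by (apply Rmult_lt_compat_r; lra).
    simpl in Hk. nra. }
  unfold Rdist. rewrite Rminus_0_r, Rabs_right.
  - apply (Rmult_lt_reg_r n); [lra|]. unfold Rdiv. rewrite Rmult_assoc, Rinv_l by lra. lra.
  - apply Rle_ge. unfold Rdiv. apply Rmult_le_pos; [lra|]. left. apply Rinv_0_lt_compat. lra.
Qed.
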